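(* Let $1/4<a\le1/3$ and $m\ge6$ be an integer. For $\theta\in(2\pi/3,\pi)$ with $1-4a\cos^2\theta\neq0$ define \[ \zeta(\theta)=\frac{(2a-1)\cos\theta+\sqrt{(1-4a)\cos^2\theta+a}}{1-4a\cos^2\theta},\qquad g_m(\theta)=\frac{(\zeta(\theta)-\cos\theta)\sin((m+1)\theta)}{\sin\theta}-\cos((m+1)\theta)+\frac{1}{\zeta(\theta)^{m+1}}. \] Then there exists $h\in\mathbb{N}$ with $\lfloor 2(m+1)/3\rfloor+1\le h-1<h\le m+1$ such that \[ \theta_{h-1}:=\frac{h-1}{m+1}\pi<\cos^{-1}\!\left(-\frac{1}{2\sqrt a}\right)\le\frac{h}{m+1}\pi=:\theta_h. \] Furthermore, provided $\cos^{-1}\!\left(-\frac{1}{2\sqrt a}\right)\neq\frac{h}{m+1}\pi$, the function $g_m$ has at least two zeros in the open interval $J_h=\left(\frac{h-1}{m+1}\pi,\frac{h}{m+1}\pi\right)$ whenever $h\le m$, and at least one zero in $J_h$ when $h=m+1$.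
   Context: Here $\cos^{-1}$ takes values in $[0,\pi]$. The functions $\zeta$ and $g_m$ are real-valued on their domain and have a vertical asymptote at $\theta=\cos^{-1}(-1/(2\sqrt a))$, where $1-4a\cos^2\theta=0$; zeros of $g_m$ are counted at points of $J_h$ where $g_m$ is defined. *)

(* Defs.v *)
From Stdlib Require Import Reals Lra Lia.
Open Scope R_scope.

Definition zeta (a t : R) : R :=
  ((2*a - 1) * cos t + sqrt ((1 - 4*a) * (cos t)^2 + a)) / (1 - 4*a*(cos t)^2).

Definition g (a : R) (m : nat) (t : R) : R :=
  (zeta a t - cos t) * sin (INR (m+1) * t) / sin t
  - cos (INR (m+1) * t) + 1 / (zeta a t) ^ (m+1).

Definition g_defined (a : R) (t : R) : Prop :=
  1 - 4*a*(cos t)^2 <> 0 /\ sin t <> 0 /\ zeta a t <> 0.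

Definition zero_in (a : R) (m : nat) (lo hi t : R) : Prop :=
  lo < t < hi /\ g_defined a t /\ g a m t = 0.

(* Main.v *)
Require Import Defs.
From Stdlib Require Import Reals Lra Lia.
From Coquelicot Require Import Coquelicot.
Open Scope R_scope.

Lemma sincos_kpi k : sin (INR k * PI) = 0 /\ cos (INR k * PI) = (-1)^k.
Proof.
  induction k as [|k [IH1 IH2]].
  - simpl. rewrite Rmult_0_l, sin_0, cos_0. auto.
  - replace (INR (S k) * PI) with (INR k * PI + PI) by (rewrite S_INR; ring).
    rewrite neg_sin, neg_cos, IH1, IH2. simpl. split; ring.
Qed.

Lemma sin_sign k : forall x, INR k * PI < x < INR (S k) * PI -> 0 < (-1)^k * sin x.
Proof.
  induction k as [|k IH]; intros x Hx.
  - simpl in *. rewrite Rmult_0_l in Hx. rewrite Rmult_1_l in Hx |- *.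
    apply sin_gt_0; lra.
  - rewrite S_INR in Hx. rewrite (S_INR (S k)) in Hx.
    replace x with ((x - PI) + PI) by ring. rewrite neg_sin.
    replace ((-1)^(S k) * - sin (x - PI)) with ((-1)^k * sin (x - PI)) by (simpl; ring).
    apply IH. rewrite !S_INR in *. rewrite !Rmult_plus_distr_r in *. lra.
Qed.

Lemma exists_h x N : 0 < x -> x <= INR N -> exists h, (1 <= h)%nat /\ INR (h-1) < x <= INR h.
Proof.
  intros Hx. induction N as [|N IH]; intros HN.
  - simpl in HN. lra.
  - destruct (Rle_lt_dec x (INR N)) as [H|H].
    + now apply IH.
    + exists (S N). split; [lia|]. replace (S N - 1)%nat with N by lia. lra.
Qed.

Lemma sigma2 k : (-1)^k * (-1)^k = 1.
Proof. rewrite <- Rpow_mult_distr. replace (-1 * -1) with 1 by ring. apply pow1. Qed.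

Definition Nf a t := (2*a-1)*cos t + sqrt((1-4*a)*(cos t)^2 + a).
Definition Df a t := 1 - 4*a*(cos t)^2.
Definition Gf a m t := (Nf a t - cos t * Df a t) * sin (INR (m+1) * t) / sin t
   - Df a t * cos (INR (m+1) * t) + Df a t * (Df a t / Nf a t)^(m+1).

Lemma good_facts a t : 1/4 < a <= 1/3 -> PI/2 < t < PI ->
  -1 < cos t < 0 /\ 0 < sin t /\ 0 < (1-4*a)*(cos t)^2 + a /\ 0 < Nf a t.
Proof.
  intros Ha Ht. pose proof PI_RGT_0.
  assert (c1 : cos PI < cos t) by (apply cos_decreasing_1; lra).
  rewrite cos_PI in c1.
  assert (c2 : cos t < 0) by (apply cos_lt_0; lra).
  assert (s : 0 < sin t) by (apply sin_gt_0; lra).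
  assert (c3 : cos t ^ 2 < 1) by nra.
  assert (c4 : 0 < (4*a-1)*(1 - cos t^2)) by (apply Rmult_lt_0_compat; lra).
  assert (S : 0 < (1-4*a)*(cos t)^2 + a) by nra.
  repeat split; try lra.
  unfold Nf. pose proof (sqrt_pos ((1-4*a)*(cos t)^2 + a)). nra.
Qed.

Lemma G_cont a m k t : 1/4 < a <= 1/3 -> PI/2 < t < PI ->
  continuity_pt (fun t => (-1)^k * Gf a m t) t.
Proof.
  intros Ha Ht. destruct (good_facts a t Ha Ht) as (c & s & S & N).
  apply continuity_pt_filterlim.
  pose proof (ex_derive_continuous (K:=R_AbsRing) (V:=R_NormedModule) (fun t => (-1)^k * Gf a m t) t) as HC.
  apply HC.
  unfold Gf, Nf, Df in *. auto_derive. replace (cos t * (cos t * 1)) with (cos t ^ 2) by ring. repeat split; lra.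
Qed.

Lemma g_eq a m t : sin t <> 0 -> Df a t <> 0 -> Nf a t <> 0 ->
  g a m t = Gf a m t / Df a t.
Proof.
  intros s D N. 
  assert (E : 1 / (Nf a t / Df a t)^(m+1) = (Df a t / Nf a t)^(m+1)).
  { assert (P : (Nf a t / Df a t)^(m+1) * (Df a t / Nf a t)^(m+1) = 1).
    { rewrite <- Rpow_mult_distr. replace (Nf a t / Df a t * (Df a t / Nf a t)) with 1 by (field; auto). apply pow1. }
    assert ((Nf a t / Df a t)^(m+1) <> 0) by (apply pow_nonzero; unfold Rdiv; apply Rmult_integral_contrapositive_currified; [auto | apply Rinv_neq_0_compat; auto]).
    field_simplify; auto. rewrite <- P. field. auto. }
  unfold g, zeta. fold (Df a t). fold (Nf a t). rewrite E.
  unfold Gf. field. auto.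
Qed.

Lemma ND_left a c: 1/4<a<=1/3 -> -1 < c < -1/2 -> 0 < 1-4*a*c^2 ->
  1 - 4*a*c^2 < (2*a-1)*c + sqrt((1-4*a)*c^2+a).
Proof.
  intros Ha Hc HD.
  assert (c3 : c ^ 2 < 1) by nra.
  assert (c4 : 0 < (4*a-1)*(1 - c^2)) by (apply Rmult_lt_0_compat; lra).
  assert (S : 0 < (1-4*a)*c^2 + a) by nra.
  pose proof (sqrt_pos ((1-4*a)*c^2+a)) as s0.
  pose proof (sqrt_sqrt ((1-4*a)*c^2+a) (Rlt_le _ _ S)) as ss.
  set (s := sqrt ((1-4*a)*c^2+a)) in *.
  set (D := 1-4*a*c^2) in *.
  set (R0 := D - (2*a-1)*c).
  assert (id : s*s - R0*R0 = D*((2*c+1)*(2*a*c-1+a))) by (rewrite ss; unfold R0, D; ring).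
  assert (q1: 2*c+1 < 0) by lra. assert (q2: 2*a*c - 1 + a < 0) by nra.
  assert (p1 : 0 < (2*c+1)*(2*a*c-1+a)) by nra.
  assert (p2 : 0 < D*((2*c+1)*(2*a*c-1+a))) by (apply Rmult_lt_0_compat; lra).
  assert (s > R0) by nra.
  unfold R0 in *. lra.
Qed.

Lemma ND_right a c: 1/4<a<=1/3 -> -1 < c < 0 -> 1-4*a*c^2 < 0 ->
  0 < 1 - 4*a*c^2 + ((2*a-1)*c + sqrt((1-4*a)*c^2+a)).
Proof.
  intros Ha Hc HD.
  assert (c3 : c ^ 2 < 1) by nra.
  assert (c4 : 0 < (4*a-1)*(1 - c^2)) by (apply Rmult_lt_0_compat; lra).
  assert (S : 0 < (1-4*a)*c^2 + a) by nra.
  pose proof (sqrt_pos ((1-4*a)*c^2+a)) as s0.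
  pose proof (sqrt_sqrt ((1-4*a)*c^2+a) (Rlt_le _ _ S)) as ss.
  set (s := sqrt ((1-4*a)*c^2+a)) in *.
  set (D := 1-4*a*c^2) in *.
  set (R0 := - D - (2*a-1)*c).
  assert (id : s*s - R0*R0 = D*((2*c-1)*(2*a*c+1-a))) by (rewrite ss; unfold R0, D; ring).
  assert (q1: 2*c-1 < 0) by lra. assert (q2: 0 < 2*a*c + 1 - a) by nra.
  assert (p1 : (2*c-1)*(2*a*c+1-a) < 0) by nra.
  assert (p2 : 0 < D*((2*c-1)*(2*a*c+1-a))) by nra.
  assert (s > R0) by nra.
  unfold R0 in *. lra.
Qed.

Lemma abs_sig k r n : Rabs r < 1 -> (0 < n)%nat -> (-1)^k * r^n < 1 /\ -1 < (-1)^k * r^n.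
Proof.
  intros Hr Hn. apply Rabs_def2.
  rewrite Rabs_mult, pow_1_abs, <- RPow_abs, Rmult_1_l.
  apply pow_lt_1_compat; [split; [apply Rabs_pos|exact Hr] | exact Hn].
Qed.

Lemma pow_S_pred h : (1<=h)%nat -> (-1)^h = - (-1)^(h-1).
Proof. intros H. destruct h as [|h']; [lia|]. simpl. replace (h' - 0)%nat with h' by lia. ring. Qed.

Lemma cos_2PI3 : cos (2*PI/3) = -1/2.
Proof.
  replace (2*PI/3) with (-(PI/3) + PI) by field. rewrite neg_cos, cos_neg, cos_PI3. field.
Qed.

Lemma zeros_lemma (a c0 ts : R) (m h : nat) :
  1/4 < a <= 1/3 -> (1 <= h)%nat -> 4*a*c0^2 = 1 -> c0 < 0 -> 0 <= ts -> ts < PI ->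
  cos ts = c0 ->
  2*PI/3 < INR (h-1)/INR (m+1)*PI ->
  INR (h-1)/INR (m+1)*PI < ts < INR h/INR (m+1)*PI ->
  (exists t, INR (h-1)/INR (m+1)*PI < t < ts /\ g_defined a t /\ g a m t = 0) /\
  (INR h/INR (m+1)*PI < PI -> exists t, ts < t < INR h/INR (m+1)*PI /\ g_defined a t /\ g a m t = 0).
Proof.
  intros Ha Hh Hc0 Hc0n Hts0 HtsPI Hcts H23 Hlt.
  pose proof PI_RGT_0 as HPI.
  assert (HnR : INR (m+1) > 0) by (apply lt_0_INR; lia).
  set (nR := INR (m+1)) in *.
  set (lo := INR (h-1)/nR*PI) in *.
  set (hi := INR h/nR*PI) in *.
  assert (Hlo : nR * lo = INR (h-1) * PI) by (unfold lo; field; lra).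
  assert (Hhi : nR * hi = INR h * PI) by (unfold hi; field; lra).
  set (sg := (-1)^(h-1)).
  assert (Hsg : sg * sg = 1) by apply sigma2.
  assert (Hsgh : (-1)^h = - sg) by (apply pow_S_pred; exact Hh).
  set (f := fun t => sg * Gf a m t).
  assert (Hmn : (0 < m+1)%nat) by lia.
  assert (HDts : Df a ts = 0) by (unfold Df; rewrite Hcts; lra).
  assert (Hgts : PI/2 < ts < PI) by lra.
  destruct (good_facts a ts Ha Hgts) as (_ & sts & _ & Nts).
  assert (Hsin : 0 < sg * sin (nR * ts)).
  { unfold sg. apply sin_sign. replace (S (h-1)) with h by lia.
    rewrite <- Hlo, <- Hhi. split; apply Rmult_lt_compat_l; lra. }
  assert (fts : 0 < f ts).
  { unfold f, Gf. fold nR. rewrite HDts.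
    replace (sg * ((Nf a ts - cos ts * 0) * sin (nR * ts) / sin ts - 0 * cos (nR * ts) +
      0 * (0 / Nf a ts) ^ (m + 1))) with (Nf a ts * (sg * sin (nR * ts)) / sin ts) by (field; lra).
    apply Rdiv_lt_0_compat; [apply Rmult_lt_0_compat|]; lra. }
  split.
  -
    assert (Hglo : PI/2 < lo < PI) by lra.
    destruct (good_facts a lo Ha Hglo) as (clo & slo & _ & Nlo).
    assert (c1 : cos ts < cos lo) by (apply cos_decreasing_1; lra).
    assert (c2 : cos lo < cos (2*PI/3)) by (apply cos_decreasing_1; lra).
    rewrite cos_2PI3 in c2.
    assert (Dlo : 0 < Df a lo) by (unfold Df; nra).
    assert (NDlo : Df a lo < Nf a lo) by (unfold Df, Nf; apply ND_left; unfold Df in Dlo; lra).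
    assert (Rr : Rabs (Df a lo / Nf a lo) < 1).
    { apply Rabs_def1; [apply (Rmult_lt_reg_r (Nf a lo)); [lra|]; field_simplify; lra |].
      apply Rlt_trans with 0; [lra|]. apply Rdiv_lt_0_compat; lra. }
    destruct (abs_sig (h-1) (Df a lo / Nf a lo) (m+1) Rr Hmn) as [b1 b2].
    fold sg in b1, b2.
    assert (flo : f lo < 0).
    { unfold f, Gf. fold nR. rewrite Hlo. destruct (sincos_kpi (h-1)) as [e1 e2].
      rewrite e1, e2. fold sg.
      replace (sg * ((Nf a lo - cos lo * Df a lo) * 0 / sin lo - Df a lo * sg +
        Df a lo * (Df a lo / Nf a lo) ^ (m + 1))) with
        (Df a lo * (sg * (Df a lo / Nf a lo) ^ (m + 1) - sg * sg)) by (field; lra).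
      rewrite Hsg. nra. }
    assert (Hc : forall t, lo <= t <= ts -> continuity_pt f t).
    { intros t Ht. apply G_cont; lra. }
    destruct (Ranalysis5.IVT_interv f lo ts Hc (proj1 Hlt) flo fts) as [z [Hz fz]].
    assert (z1 : z <> lo) by (intro E; rewrite E in fz; lra).
    assert (z2 : z <> ts) by (intro E; rewrite E in fz; lra).
    assert (Hgz : PI/2 < z < PI) by lra.
    destruct (good_facts a z Ha Hgz) as (cz & sz & _ & Nz).
    assert (c3 : cos ts < cos z) by (apply cos_decreasing_1; lra).
    assert (Dz : 0 < Df a z) by (unfold Df; nra).
    assert (Gz : Gf a m z = 0).
    { unfold f in fz. replace (Gf a m z) with (sg * (sg * Gf a m z)) by (rewrite <- Rmult_assoc, Hsg; ring).
      rewrite fz. ring. }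
    exists z. split; [lra|]. split.
    + unfold g_defined. split; [fold (Df a z); lra|]. split; [lra|].
      change (Nf a z / Df a z <> 0). apply Rgt_not_eq, Rdiv_lt_0_compat; lra.
    + rewrite g_eq; try lra. rewrite Gz. unfold Rdiv. ring.
  -
    intros HhiPI.
    assert (Hghi : PI/2 < hi < PI) by lra.
    destruct (good_facts a hi Ha Hghi) as (chi & shi & _ & Nhi).
    assert (c1 : cos hi < cos ts) by (apply cos_decreasing_1; lra).
    assert (Dhi : Df a hi < 0) by (unfold Df; nra).
    assert (NDhi : 0 < Df a hi + Nf a hi) by (unfold Df, Nf; apply ND_right; unfold Df in Dhi; lra).
    assert (Rr : Rabs (Df a hi / Nf a hi) < 1).
    { apply Rabs_def1.
      - apply Rlt_trans with 0; [|lra]. apply (Rmult_lt_reg_r (Nf a hi)); [lra|]. field_simplify; lra.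
      - apply (Rmult_lt_reg_r (Nf a hi)); [lra|]. field_simplify; lra. }
    destruct (abs_sig (h-1) (Df a hi / Nf a hi) (m+1) Rr Hmn) as [b1 b2].
    fold sg in b1, b2.
    assert (fhi : f hi < 0).
    { unfold f, Gf. fold nR. rewrite Hhi. destruct (sincos_kpi h) as [e1 e2].
      rewrite e1, e2, Hsgh.
      replace (sg * ((Nf a hi - cos hi * Df a hi) * 0 / sin hi - Df a hi * - sg +
        Df a hi * (Df a hi / Nf a hi) ^ (m + 1))) with
        (Df a hi * (sg * sg + sg * (Df a hi / Nf a hi) ^ (m + 1))) by (field; lra).
      rewrite Hsg. nra. }
    set (f' := fun t => - f t).
    assert (Hc : forall t, ts <= t <= hi -> continuity_pt f' t).
    { intros t Ht. unfold f'. apply continuity_pt_opp. apply G_cont; lra. }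
    assert (f'1 : f' ts < 0) by (unfold f'; lra).
    assert (f'2 : 0 < f' hi) by (unfold f'; lra).
    destruct (Ranalysis5.IVT_interv f' ts hi Hc (proj2 Hlt) f'1 f'2) as [z [Hz fz]].
    assert (z1 : z <> hi) by (intro E; rewrite E in fz; lra).
    assert (z2 : z <> ts) by (intro E; rewrite E in fz; lra).
    assert (Hgz : PI/2 < z < PI) by lra.
    destruct (good_facts a z Ha Hgz) as (cz & sz & _ & Nz).
    assert (c3 : cos z < cos ts) by (apply cos_decreasing_1; lra).
    assert (Dz : Df a z < 0) by (unfold Df; nra).
    assert (Gz : Gf a m z = 0).
    { unfold f', f in fz. assert (fz' : sg * Gf a m z = 0) by lra.
      replace (Gf a m z) with (sg * (sg * Gf a m z)) by (rewrite <- Rmult_assoc, Hsg; ring).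
      rewrite fz'. ring. }
    exists z. split; [lra|]. split.
    + unfold g_defined. split; [fold (Df a z); lra|]. split; [lra|].
      change (Nf a z / Df a z <> 0). unfold Rdiv. apply Rmult_integral_contrapositive_currified; [lra|].
      apply Rinv_neq_0_compat; lra.
    + rewrite g_eq; try lra. rewrite Gz. unfold Rdiv. ring.
Qed.

Theorem lemma2p6 (a : R) (m : nat) :
  1/4 < a <= 1/3 -> (6 <= m)%nat ->
  exists h : nat,
    ((2 * (m+1)) / 3 + 1 <= h - 1)%nat /\ (h - 1 < h)%nat /\ (h <= m + 1)%nat /\
    INR (h - 1) / INR (m+1) * PI < acos (- (1 / (2 * sqrt a))) /\
    acos (- (1 / (2 * sqrt a))) <= INR h / INR (m+1) * PI /\
    (acos (- (1 / (2 * sqrt a))) <> INR h / INR (m+1) * PI ->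
      ((h <= m)%nat ->
         exists t1 t2, t1 <> t2 /\
           zero_in a m (INR (h - 1) / INR (m+1) * PI) (INR h / INR (m+1) * PI) t1 /\
           zero_in a m (INR (h - 1) / INR (m+1) * PI) (INR h / INR (m+1) * PI) t2) /\
      (h = (m + 1)%nat ->
         exists t,
           zero_in a m (INR (h - 1) / INR (m+1) * PI) (INR h / INR (m+1) * PI) t)).
Proof.
  intros Ha Hm.
  pose proof PI_RGT_0 as HPI.
  assert (Hsa : sqrt a * sqrt a = a) by (apply sqrt_sqrt; lra).
  pose proof (sqrt_pos a) as Hsa0.
  set (sa := sqrt a) in *.
  assert (Hsa1 : sa > 1/2) by nra.
  set (c0 := - (1 / (2 * sa))).
  assert (Hc0a : c0 * (2*sa) = -1) by (unfold c0; field; lra).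
  assert (Hc0sq : 4*a*c0^2 = 1).
  { rewrite <- Hsa. unfold c0. field. lra. }
  assert (Hc0m1 : -1 < c0) by nra.
  assert (Hc0n : c0 < 0) by nra.
  pose proof (sqrt_pos 3) as H30.
  assert (H3 : sqrt 3 * sqrt 3 = 3) by (apply sqrt_sqrt; lra).
  assert (H3a : sqrt 3 * sa <= 1) by nra.
  assert (Hc0s : c0 <= - (sqrt 3 / 2)) by nra.
  set (ts := acos c0).
  assert (Hcts : cos ts = c0) by (apply cos_acos; lra).
  destruct (acos_bound c0) as [Hts0 Hts1]. fold ts in Hts0, Hts1.
  assert (HtsPI : ts < PI).
  { destruct (Rle_lt_or_eq_dec _ _ Hts1) as [E|E]; [exact E|].
    rewrite E, cos_PI in Hcts. lra. }
  assert (Hts56 : 5*PI/6 <= ts).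
  { destruct (Rle_lt_dec (5*PI/6) ts) as [E|E]; [exact E|].
    assert (cos (5*PI/6) < cos ts) by (apply cos_decreasing_1; lra).
    replace (5*PI/6) with (-(PI/6) + PI) in H by field.
    rewrite neg_cos, cos_neg, cos_PI6 in H. lra. }
  assert (HnR : INR (m+1) > 0) by (apply lt_0_INR; lia).
  set (nR := INR (m+1)) in *.
  set (x := nR * ts / PI).
  assert (Hx0 : 0 < x) by (unfold x; apply Rdiv_lt_0_compat; [apply Rmult_lt_0_compat|]; lra).
  assert (HxPI : x * PI = nR * ts) by (unfold x; field; lra).
  assert (Hxn : x < nR).
  { apply (Rmult_lt_reg_r PI); [lra|]. rewrite HxPI. apply Rmult_lt_compat_l; lra. }
  destruct (exists_h x (m+1) Hx0 (Rlt_le _ _ Hxn)) as [h [Hh1 [Hxl Hxu]]].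
  assert (H6 : (5*(m+1) <= 6*h)%nat).
  { apply INR_le. rewrite !mult_INR. fold nR. simpl INR.
    assert (5*nR*PI <= 6 * (x * PI)) by (rewrite HxPI; nra). nra. }
  assert (Hhm : (h - 1 < m + 1)%nat) by (apply INR_lt; fold nR; lra).
  assert (Hnat : ((2 * (m+1)) / 3 + 1 <= h - 1)%nat) by (pose proof (Nat.mul_div_le (2*(m+1)) 3); lia).
  assert (H3h : (2*(m+1) + 1 <= 3*(h-1))%nat) by lia.
  set (lo := INR (h-1)/nR*PI).
  set (hi := INR h/nR*PI).
  assert (Hlo : nR * lo = INR (h-1) * PI) by (unfold lo; field; lra).
  assert (Hhi : nR * hi = INR h * PI) by (unfold hi; field; lra).
  assert (Hlots : lo < ts).
  { apply (Rmult_lt_reg_l nR); [lra|]. rewrite Hlo. replace (nR * ts) with (x * PI) by lra. apply Rmult_lt_compat_r; lra. }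
  assert (Htshi : ts <= hi).
  { apply (Rmult_le_reg_l nR); [lra|]. rewrite Hhi. replace (nR * ts) with (x * PI) by lra. apply Rmult_le_compat_r; lra. }
  assert (H23 : 2*PI/3 < lo).
  { apply (Rmult_lt_reg_l nR); [lra|]. rewrite Hlo.
    apply le_INR in H3h. rewrite plus_INR, !mult_INR in H3h. fold nR in H3h. simpl INR in H3h.
    nra. }
  exists h. split; [exact Hnat|]. split; [lia|]. split; [lia|].
  split; [exact Hlots|]. split; [exact Htshi|].
  intros Hne.
  assert (Hlt : lo < ts < hi) by (destruct (Rle_lt_or_eq_dec _ _ Htshi) as [E|E]; [lra| contradiction]).
  destruct (zeros_lemma a c0 ts m h Ha Hh1 Hc0sq Hc0n Hts0 HtsPI Hcts H23 Hlt) as [[t1 [Ht1 [Hd1 Hg1]]] R].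
  change (INR (m+1)) with nR in Ht1, R. fold lo in Ht1. fold hi in R. fold hi in R.
  split.
  - intros Hhm'.
    assert (HhiPI : hi < PI).
    { apply (Rmult_lt_reg_l nR); [lra|]. rewrite Hhi.
      assert (INR h < nR) by (apply lt_INR; lia). nra. }
    destruct (R HhiPI) as [t2 [Ht2 [Hd2 Hg2]]].
    exists t1, t2. split; [apply Rlt_not_eq; lra|].
    split; (split; [fold lo; fold hi; lra| split; assumption]).
  - intros _. exists t1. split; [fold lo; fold hi; lra| split; assumption].
Qed.
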